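(* Consider the local public good game described in the context and suppose Assumption 1 holds. Then the efficient network is either empty or a star in which only the hub is active (provides a positive amount of the public good), with possibly some players isolated from the star; a player is isolated if her valuation of the public good is too low.
   Context: There is a finite set of players $N=\{1,\dots,n\}$. An allocation specifies for each player $i$ a public good provision $x_i\ge 0$, a private good consumption $y_i\ge 0$, and links $g_i\in\{0,1\}^n$ with $g_{ii}=0$; $g_{ij}=1$ means $i$ links to $j$, at cost $k>0$ to $i$. Let $\eta_i(g)=|\{j:g_{ij}=1\}|$. Player $i$'s public good consumption is $\bar x_i=x_i+\sum_jg_{ij}x_j$ and her utility is $U_i(\bar x_i,y_i)$, where $U_i$ is twice continuously differentiable, strictly concave and increasing in both arguments. Player $i$ has wealth $w_i>0$ and faces price $p_i>0$ for the private good (public good price $1$). The efficient allocation maximizes welfare $\sum_iU_i(\bar x_i,y_i)$ subject to the aggregate resource constraint $\sum_i(x_i+p_iy_i+\eta_i(g)k)\le\sum_iw_i$. The Engel curve $\gamma_i$ gives, for income $W$, the public good consumption maximizing $U_i(\bar x,y)$ subject to $\bar x+p_iy=W$; Assumption 1: each $\gamma_i$ is continuously differentiable with $\gamma_i'\in[0,1]$. A star is a network with one hub $h$ to which every other member links, with no other links among its members; isolated players have no links. *)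

(* Defs.v *)
(* Players are the naturals 0..n-1. *)
From Stdlib Require Import Reals List.
From Coquelicot Require Import Coquelicot.
Open Scope R_scope.

Definition sumR (n : nat) (f : nat -> R) : R :=
  fold_right Rplus 0 (map f (seq 0 n)).

(* g i j = true  <->  i links to j *)
Definition network := nat -> nat -> bool.

Definition eta (n : nat) (g : network) (i : nat) : R :=
  sumR n (fun j => if g i j then 1 else 0).

Definition xbar (n : nat) (x : nat -> R) (g : network) (i : nat) : R :=
  x i + sumR n (fun j => if g i j then x j else 0).

Definition feasible (n : nat) (w p : nat -> R) (k : R)
  (x y : nat -> R) (g : network) : Prop :=
  (forall i, (i < n)%nat -> 0 <= x i /\ 0 <= y i /\ g i i = false) /\
  sumR n (fun i => x i + p i * y i + eta n g i * k) <= sumR n w.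

Definition welfare (n : nat) (U : nat -> R -> R -> R)
  (x y : nat -> R) (g : network) : R :=
  sumR n (fun i => U i (xbar n x g i) (y i)).

Definition efficient (n : nat) (U : nat -> R -> R -> R) (w p : nat -> R) (k : R)
  (x y : nat -> R) (g : network) : Prop :=
  feasible n w p k x y g /\
  forall x' y' g', feasible n w p k x' y' g' ->
    welfare n U x' y' g' <= welfare n U x y g.

Definition d1 (u : R -> R -> R) (a b : R) : R := Derive (fun t => u t b) a.
Definition d2 (u : R -> R -> R) (a b : R) : R := Derive (fun t => u a t) b.

Definition C1_at (u : R -> R -> R) (a b : R) : Prop :=
  ex_derive (fun t => u t b) a /\ ex_derive (fun t => u a t) b /\
  continuity_2d_pt (d1 u) a b /\ continuity_2d_pt (d2 u) a b.

Definition C2_at (u : R -> R -> R) (a b : R) : Prop :=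
  C1_at u a b /\ C1_at (d1 u) a b /\ C1_at (d2 u) a b.

(* twice continuously differentiable on (an open neighbourhood of) the
   closed quadrant [0,oo)^2 *)
Definition C2_quadrant (u : R -> R -> R) : Prop :=
  exists eps, 0 < eps /\ forall a b, -eps < a -> -eps < b -> C2_at u a b.

Definition strictly_concave_quadrant (u : R -> R -> R) : Prop :=
  forall a b a' b' t, 0 <= a -> 0 <= b -> 0 <= a' -> 0 <= b' ->
    (a, b) <> (a', b') -> 0 < t < 1 ->
    t * u a b + (1 - t) * u a' b' < u (t * a + (1 - t) * a') (t * b + (1 - t) * b').

Definition increasing_quadrant (u : R -> R -> R) : Prop :=
  (forall a a' b, 0 <= a -> a < a' -> 0 <= b -> u a b < u a' b) /\
  (forall a b b', 0 <= a -> 0 <= b -> b < b' -> u a b < u a b').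

Definition engel_curve (u : R -> R -> R) (q : R) (gam : R -> R) : Prop :=
  forall W, 0 <= W ->
    0 <= gam W <= W /\
    forall xb yv, 0 <= xb -> 0 <= yv -> xb + q * yv = W ->
      u xb yv <= u (gam W) ((W - gam W) / q).

Definition assumption1_curve (gam : R -> R) : Prop :=
  forall W, 0 < W ->
    ex_derive gam W /\ 0 <= Derive gam W <= 1 /\ continuous (Derive gam) W.

Definition empty_network (n : nat) (g : network) : Prop :=
  forall i j, (i < n)%nat -> (j < n)%nat -> g i j = false.

(* Players outside the star
   are unconstrained in their provision. *)
Definition star_only_hub_active (n : nat) (g : network) (x : nat -> R) : Prop :=
  exists (h : nat) (S : nat -> bool),
    (h < n)%nat /\ S h = true /\
    (exists i, (i < n)%nat /\ S i = true /\ i <> h) /\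
    (forall i j, (i < n)%nat -> (j < n)%nat ->
       (g i j = true <-> (S i = true /\ i <> h /\ j = h))) /\
    0 < x h /\
    (forall i, (i < n)%nat -> S i = true -> i <> h -> x i = 0).

(* Main.v *)
Require Import Defs.
From Stdlib Require Import Reals List Lra Lia Arith Bool Classical.
From Coquelicot Require Import Coquelicot.
Open Scope R_scope.

Definition I (b : bool) : R := if b then 1 else 0.

Lemma fold_plus_c (l : list R) (c : R) :
  fold_right Rplus c l = fold_right Rplus 0 l + c.
Proof. induction l; simpl; [lra| rewrite IHl; lra]. Qed.

Lemma sumR_0 f : sumR 0 f = 0.
Proof. reflexivity. Qed.

Lemma sumR_S n f : sumR (S n) f = sumR n f + f n.
Proof.
  unfold sumR. rewrite seq_S, map_app, fold_right_app. simpl.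
  rewrite fold_plus_c. lra.
Qed.

Lemma sumR_ext n f g : (forall i, (i < n)%nat -> f i = g i) -> sumR n f = sumR n g.
Proof.
  induction n; intros H; [reflexivity|]. rewrite !sumR_S, IHn, H; auto.
Qed.

Lemma sumR_le n f g : (forall i, (i < n)%nat -> f i <= g i) -> sumR n f <= sumR n g.
Proof.
  induction n; intros H; [rewrite !sumR_0; lra|]. rewrite !sumR_S.
  assert (sumR n f <= sumR n g) by (apply IHn; auto). specialize (H n). 
  assert (f n <= g n) by (apply H; lia). lra.
Qed.

Lemma sumR_lt n f g j : (forall i, (i < n)%nat -> f i <= g i) -> (j < n)%nat -> f j < g j ->
  sumR n f < sumR n g.
Proof.
  induction n; intros H Hj Hs; [lia|]. rewrite !sumR_S.
  destruct (Nat.eq_dec j n).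
  - subst. assert (sumR n f <= sumR n g) by (apply sumR_le; auto). lra.
  - assert (sumR n f < sumR n g) by (apply IHn; auto; lia).
    assert (f n <= g n) by (apply H; lia). lra.
Qed.

Lemma sumR_plus n f g : sumR n (fun i => f i + g i) = sumR n f + sumR n g.
Proof. induction n; [rewrite !sumR_0; lra|]. rewrite !sumR_S, IHn; lra. Qed.

Lemma sumR_scal n c f : sumR n (fun i => c * f i) = c * sumR n f.
Proof. induction n; [rewrite !sumR_0; lra|]. rewrite !sumR_S, IHn; lra. Qed.

Lemma sumR_single n a c : (a < n)%nat ->
  sumR n (fun i => if Nat.eqb i a then c else 0) = c.
Proof.
  induction n; intros H; [lia|]. rewrite sumR_S.
  destruct (Nat.eq_dec a n).
  - subst. rewrite Nat.eqb_refl.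
    assert (sumR n (fun i => if Nat.eqb i n then c else 0) = 0).
    { clear IHn H. transitivity (sumR n (fun _ => 0)).
      apply sumR_ext; intros i Hi. destruct (Nat.eqb_spec i n); [lia|auto].
      induction n; [reflexivity|]. rewrite sumR_S. 
      assert (sumR n (fun _ => 0) = 0). { clear IHn. induction n; [reflexivity|rewrite sumR_S, IHn; lra]. }
      lra. }
    lra.
  - rewrite IHn by lia. destruct (Nat.eqb_spec n a); [lia|lra].
Qed.

Lemma sumR_zero n : sumR n (fun _ => 0) = 0.
Proof. induction n; [reflexivity|rewrite sumR_S, IHn; lra]. Qed.

Lemma sumR_pt1 n f f' a c : (a < n)%nat ->
  (forall v, (v < n)%nat -> f' v = f v + (if Nat.eqb v a then c else 0)) ->
  sumR n f' = sumR n f + c.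
Proof.
  intros Ha H. rewrite (sumR_ext n f' (fun v => f v + (if Nat.eqb v a then c else 0))) by auto.
  rewrite sumR_plus, sumR_single; auto.
Qed.

Lemma sumR_pt2 n f f' a b ca cb : (a < n)%nat -> (b < n)%nat ->
  (forall v, (v < n)%nat -> f' v = f v + (if Nat.eqb v a then ca else 0)
                                      + (if Nat.eqb v b then cb else 0)) ->
  sumR n f' = sumR n f + ca + cb.
Proof.
  intros Ha Hb H. rewrite (sumR_ext n f' (fun v => (f v + (if Nat.eqb v a then ca else 0))
                                      + (if Nat.eqb v b then cb else 0))) by auto.
  rewrite !sumR_plus, !sumR_single; auto.
Qed.

Lemma sumR_nonneg n f : (forall i, (i < n)%nat -> 0 <= f i) -> 0 <= sumR n f.
Proof. intros H. rewrite <- (sumR_zero n). apply sumR_le; auto. Qed.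

Lemma deriv_lower f a l c : is_derive f a l ->
  (forall t, 0 < t < 1 -> c <= (f (a + t) - f a) / t) -> c <= l.
Proof.
  intros Hd H. apply is_derive_Reals in Hd.
  destruct (Rle_or_lt c l) as [|Hlt]; auto. exfalso.
  destruct (Hd (c - l)) as [d Hdl]; [lra|].
  destruct d as [d dp]; simpl in *.
  assert (Hm : 0 < Rmin (d/2) (1/2)) by (apply Rmin_pos; lra).
  assert (Hm1 := Rmin_l (d/2) (1/2)). assert (Hm2 := Rmin_r (d/2) (1/2)).
  remember (Rmin (d/2) (1/2)) as h eqn:Eh.
  specialize (Hdl h ltac:(lra) ltac:(rewrite Rabs_right; lra)).
  specialize (H h ltac:(lra)).
  apply Rabs_def2 in Hdl. lra.
Qed.

Lemma fermat f l r : is_derive f 0 l -> 0 < r ->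
  (forall t, -r < t < r -> f t <= f 0) -> l = 0.
Proof.
  intros Hd Hr H. apply is_derive_Reals in Hd.
  destruct (Rtotal_order l 0) as [Hl|[Hl|Hl]]; auto; exfalso.
  - destruct (Hd (-l)) as [[d dp] Hdl]; [lra|]. simpl in Hdl.
    assert (Hm : 0 < Rmin (d/2) (r/2)) by (apply Rmin_pos; lra).
    assert (Hm1 := Rmin_l (d/2) (r/2)). assert (Hm2 := Rmin_r (d/2) (r/2)).
    remember (- Rmin (d/2) (r/2)) as h eqn:Eh.
    specialize (Hdl h ltac:(lra) ltac:(rewrite Rabs_left; lra)).
    specialize (H h ltac:(lra)).
    apply Rabs_def2 in Hdl. rewrite Rplus_0_l in Hdl.
    assert (Hq : (f h - f 0) / h >= 0).
    { unfold Rdiv. replace ((f h - f 0) * / h) with ((f 0 - f h) * / (- h)) by (field; lra).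
      apply Rle_ge, Rmult_le_pos; [lra| left; apply Rinv_0_lt_compat; lra]. }
    lra.
  - destruct (Hd l) as [[d dp] Hdl]; [lra|]. simpl in Hdl.
    assert (Hm : 0 < Rmin (d/2) (r/2)) by (apply Rmin_pos; lra).
    assert (Hm1 := Rmin_l (d/2) (r/2)). assert (Hm2 := Rmin_r (d/2) (r/2)).
    remember (Rmin (d/2) (r/2)) as h eqn:Eh.
    specialize (Hdl h ltac:(lra) ltac:(rewrite Rabs_right; lra)).
    specialize (H h ltac:(lra)).
    apply Rabs_def2 in Hdl.
    assert (Hq : 0 <= (f 0 - f h) / h).
    { apply Rmult_le_pos; [lra| left; apply Rinv_0_lt_compat; lra]. }
    replace ((f (0 + h) - f 0) / h) with (- ((f 0 - f h) / h)) in Hdl by (rewrite Rplus_0_l; field; lra).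
    lra.
Qed.

Lemma is_derive_sumR n (F : nat -> R -> R) (F' : nat -> R) t0 :
  (forall u, (u < n)%nat -> is_derive (F u) t0 (F' u)) ->
  is_derive (fun t => sumR n (fun u => F u t)) t0 (sumR n F').
Proof.
  induction n; intros H.
  - apply (is_derive_ext (fun _ => 0)). intros; reflexivity. rewrite sumR_0. apply (is_derive_const 0).
  - apply (is_derive_ext (fun t => sumR n (fun u => F u t) + F n t)).
    intros; rewrite sumR_S; reflexivity.
    rewrite sumR_S. apply (is_derive_plus (fun t => sumR n (fun u => F u t)) (F n)).
    apply IHn; auto. apply H; lia.
Qed.

Lemma is_derive_lin (G : R -> R) (A e : R) : ex_derive G A ->
  is_derive (fun t => G (A + t * e)) 0 (e * Derive G A).
Proof.
  intros Hex. apply Derive_correct in Hex.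
  assert (Hi : is_derive (fun t => A + t * e) 0 e).
  { auto_derive; [exact Logic.I|]. apply Rmult_1_l. }
  pose proof (is_derive_comp G (fun t => A + t * e) 0 (Derive G A) e) as Hc.
  simpl in Hc. replace (A + 0 * e) with A in Hc by ring. specialize (Hc Hex Hi). exact Hc.
Qed.

Definition Hyps (n : nat) (U : nat -> R -> R -> R) (p : nat -> R) (k : R) : Prop :=
  0 < k /\ (forall i, (i < n)%nat -> 0 < p i) /\
  (forall i, (i < n)%nat -> C2_quadrant (U i)) /\
  (forall i, (i < n)%nat -> strictly_concave_quadrant (U i)) /\
  (forall i, (i < n)%nat -> increasing_quadrant (U i)).

Definition costf n p k (x y : nat -> R) g i := x i + p i * y i + eta n g i * k.

Lemma U_mono n U p k i a a' b b' : Hyps n U p k -> (i < n)%nat ->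
  0 <= a <= a' -> 0 <= b <= b' -> U i a b <= U i a' b'.
Proof.
  intros (_&_&_&_&Hinc) Hi Ha Hb. destruct (Hinc i Hi) as [H1 H2].
  apply Rle_trans with (U i a' b).
  - destruct (Req_dec a a'); [subst; lra| left; apply H1; lra].
  - destruct (Req_dec b b'); [subst; lra| left; apply H2; lra].
Qed.

Lemma U_mono_strict n U p k i a a' b b' : Hyps n U p k -> (i < n)%nat ->
  0 <= a <= a' -> 0 <= b <= b' -> (a < a' \/ b < b') -> U i a b < U i a' b'.
Proof.
  intros HH Hi Ha Hb Hs. pose proof HH as (_&_&_&_&Hinc). destruct (Hinc i Hi) as [H1 H2].
  destruct Hs.
  - apply Rlt_le_trans with (U i a' b). apply H1; lra. apply (U_mono n U p k); auto; lra.
  - apply Rle_lt_trans with (U i a' b). apply (U_mono n U p k); auto; lra. apply H2; lra.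
Qed.

Lemma ex_D n U p k i a b : Hyps n U p k -> (i < n)%nat -> 0 <= a -> 0 <= b ->
  ex_derive (fun s => U i s b) a.
Proof.
  intros (_&_&HC&_) Hi Ha Hb. destruct (HC i Hi) as [eps [He HC2]].
  destruct (HC2 a b ltac:(lra) ltac:(lra)) as [[H _] _]. exact H.
Qed.

Lemma D_pos n U p k i a b : Hyps n U p k -> (i < n)%nat -> 0 <= a -> 0 <= b ->
  0 < Derive (fun s => U i s b) a.
Proof.
  intros HH Hi Ha Hb. pose proof HH as (_&_&_&Hconc&Hinc).
  pose proof (Derive_correct _ _ (ex_D n U p k i a b HH Hi Ha Hb)) as Hd.
  assert (Hc : 0 < U i (a + 1) b - U i a b) by (destruct (Hinc i Hi) as [H1 _]; specialize (H1 a (a+1) b); lra).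
  apply Rlt_le_trans with (U i (a + 1) b - U i a b); auto.
  apply (deriv_lower (fun s => U i s b) a). exact Hd.
  intros t Ht.
  assert (Hs := Hconc i Hi (a + 1) b a b t ltac:(lra) Hb Ha Hb).
  assert (Hne : (a + 1, b) <> (a, b)) by (intro E; injection E; lra).
  specialize (Hs Hne Ht).
  replace (t * (a + 1) + (1 - t) * a) with (a + t) in Hs by ring.
  replace (t * b + (1 - t) * b) with b in Hs by ring.
  apply (Rmult_le_reg_r t); [lra|]. unfold Rdiv. rewrite Rmult_assoc, Rinv_l by lra. lra.
Qed.

Lemma feas_nonneg n w p k x y g : feasible n w p k x y g ->
  forall i, (i < n)%nat -> 0 <= x i /\ 0 <= y i /\ g i i = false.
Proof. intros [H _]; exact H. Qed.

Lemma xbar_nonneg n x g : (forall i, (i < n)%nat -> 0 <= x i) ->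
  forall i, (i < n)%nat -> 0 <= xbar n x g i.
Proof.
  intros H i Hi. unfold xbar. assert (0 <= x i) by auto.
  assert (0 <= sumR n (fun j => if g i j then x j else 0)).
  { apply sumR_nonneg. intros j Hj. destruct (g i j); auto; lra. }
  lra.
Qed.

Lemma better n U w p k x y g x' y' g' j :
  Hyps n U p k -> efficient n U w p k x y g ->
  (forall i, (i < n)%nat -> 0 <= x' i /\ 0 <= y' i /\ g' i i = false) ->
  sumR n (costf n p k x' y' g') <= sumR n (costf n p k x y g) ->
  (forall i, (i < n)%nat -> U i (xbar n x g i) (y i) <= U i (xbar n x' g' i) (y' i)) ->
  (j < n)%nat -> U j (xbar n x g j) (y j) < U j (xbar n x' g' j) (y' j) -> False.
Proof.
  intros HH [[Hf Hc] Hopt] Hf' Hc' Hle Hj Hlt.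
  assert (Hfe : feasible n w p k x' y' g').
  { split; auto. unfold costf in *. lra. }
  specialize (Hopt x' y' g' Hfe). unfold welfare in Hopt.
  assert (sumR n (fun i => U i (xbar n x g i) (y i)) < sumR n (fun i => U i (xbar n x' g' i) (y' i))).
  { apply (sumR_lt n _ _ j); auto. }
  lra.
Qed.

Lemma fact1 n U w p k x y g i j : Hyps n U p k -> efficient n U w p k x y g ->
  (i < n)%nat -> (j < n)%nat -> g i j = true -> 0 < x j.
Proof.
  intros HH Heff Hi Hj Hg.
  pose proof HH as (Hk&Hp&_).
  pose proof (feas_nonneg _ _ _ _ _ _ _ (proj1 Heff)) as Hnn.
  destruct (Rlt_or_le 0 (x j)) as [|Hx]; auto. exfalso.
  assert (Hx0 : x j = 0) by (specialize (Hnn j Hj); lra).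
  set (g' := fun u v => if andb (Nat.eqb u i) (Nat.eqb v j) then false else g u v).
  set (y' := fun u => if Nat.eqb u i then y i + k / p i else y u).
  assert (Hxb : forall u, (u < n)%nat -> xbar n x g' u = xbar n x g u).
  { intros u Hu. unfold xbar. f_equal. apply sumR_ext. intros v Hv. unfold g'.
    destruct (Nat.eqb_spec u i); destruct (Nat.eqb_spec v j); simpl; subst; auto.
    rewrite Hg, Hx0; auto. }
  assert (Heta : eta n g' i = eta n g i + -1).
  { unfold eta. apply (sumR_pt1 n _ _ j); auto. intros v Hv. unfold g'.
    rewrite Nat.eqb_refl. destruct (Nat.eqb_spec v j); simpl; subst; [rewrite Hg; lra| lra]. }
  assert (Heta' : forall u, u <> i -> eta n g' u = eta n g u).
  { intros u Hu. unfold eta. apply sumR_ext. intros v Hv. unfold g'.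
    destruct (Nat.eqb_spec u i); [lia|reflexivity]. }
  apply (better n U w p k x y g x y' g' i HH Heff); auto.
  - intros u Hu. destruct (Hnn u Hu) as (A1&A2&A3). unfold y', g'. repeat split; auto.
    destruct (Nat.eqb_spec u i); [subst; specialize (Hp i Hi);
      assert (0 <= k / p i) by (apply Rdiv_le_0_compat; lra); lra|auto].
    destruct (Nat.eqb_spec u i); destruct (Nat.eqb_spec u j); simpl; auto.
  - apply sumR_le. intros u Hu. unfold costf, y'.
    destruct (Nat.eqb_spec u i).
    + subst. rewrite Heta. specialize (Hp i Hi). right. field. lra.
    + rewrite Heta' by auto. lra.
  - intros u Hu. rewrite Hxb by auto. unfold y'. destruct (Nat.eqb_spec u i); [|lra].
    subst. apply (U_mono n U p k); auto. split; [apply xbar_nonneg; auto; apply Hnn|lra].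
    specialize (Hp i Hi). assert (0 <= k / p i) by (apply Rdiv_le_0_compat; lra).
    specialize (Hnn i Hi). lra.
  - rewrite Hxb by auto. unfold y'. rewrite Nat.eqb_refl.
    apply (U_mono_strict n U p k); auto. split; [apply xbar_nonneg; auto; apply Hnn|lra].
    specialize (Hp i Hi). assert (0 < k / p i) by (apply Rdiv_lt_0_compat; lra).
    specialize (Hnn i Hi). lra.
    specialize (Hp i Hi). assert (0 < k / p i) by (apply Rdiv_lt_0_compat; lra). lra.
Qed.

Definition mergeX (x : nat -> R) (a b : nat) : nat -> R :=
  fun v => if Nat.eqb v a then 0 else if Nat.eqb v b then x a + x b else x v.

Definition mergeG (g : network) (a b : nat) : network :=
  fun u v => if Nat.eqb v a then false
             else if Nat.eqb u a then (g a v || Nat.eqb v b)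
             else if Nat.eqb v b then andb (g u b || g u a) (negb (Nat.eqb u b))
             else g u v.

Ltac crush :=
  repeat (match goal with
          | |- context [Nat.eqb ?a ?b] => destruct (Nat.eqb_spec a b); subst
          | |- context [?g ?u ?v] => is_var g;
              match type of (g u v) with bool => destruct (g u v) eqn:? end
          end); simpl in *; try lia; try congruence; try lra.


Lemma merge_loop g a b u : g a a = false -> g u u = false -> mergeG g a b u u = false.
Proof. intros Ha Hu. unfold mergeG. crush. Qed.

Lemma merge_eta_a n g a b : (a < n)%nat -> (b < n)%nat -> a <> b -> g a a = false ->
  eta n (mergeG g a b) a = eta n g a + (if g a b then 0 else 1).
Proof.
  intros Ha Hb Hab Haa. unfold eta.
  rewrite (sumR_pt2 n (fun j => if g a j then 1 else 0) _ a b 0 (if g a b then 0 else 1)); auto; [lra|].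
  intros v Hv. unfold mergeG. crush.
Qed.

Lemma merge_eta_b n g a b : (a < n)%nat -> (b < n)%nat -> a <> b -> g b b = false ->
  eta n (mergeG g a b) b = eta n g b + (if g b a then -1 else 0).
Proof.
  intros Ha Hb Hab Hbb. unfold eta.
  rewrite (sumR_pt2 n (fun j => if g b j then 1 else 0) _ a b (if g b a then -1 else 0) 0); auto; [lra|].
  intros v Hv. unfold mergeG. crush.
Qed.

Lemma merge_eta_u n g a b u : (a < n)%nat -> (b < n)%nat -> a <> b -> u <> a -> u <> b ->
  eta n (mergeG g a b) u = eta n g u + (if andb (g u a) (g u b) then -1 else 0).
Proof.
  intros Ha Hb Hab Hua Hub. unfold eta.
  rewrite (sumR_pt2 n (fun j => if g u j then 1 else 0) _ a b (if g u a then -1 else 0)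
     (if g u b then 0 else if g u a then 1 else 0)); auto.
  - crush.
  - intros v Hv. unfold mergeG. crush.
Qed.

Lemma merge_sumx n x a b : (a < n)%nat -> (b < n)%nat -> a <> b ->
  sumR n (mergeX x a b) = sumR n x.
Proof.
  intros Ha Hb Hab.
  rewrite (sumR_pt2 n x _ a b (- x a) (x a)); auto; [lra|].
  intros v Hv. unfold mergeX. crush.
Qed.

Lemma merge_xbar_a n x g a b : (a < n)%nat -> (b < n)%nat -> a <> b -> g a a = false ->
  0 <= x b -> xbar n x g a <= xbar n (mergeX x a b) (mergeG g a b) a.
Proof.
  intros Ha Hb Hab Haa Hxb. unfold xbar.
  rewrite (sumR_pt2 n (fun j => if g a j then x j else 0) (fun j => if mergeG g a b a j then mergeX x a b j else 0) a b 0 (x a + x b - (if g a b then x b else 0))); auto.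
  - unfold mergeX. crush.
  - intros v Hv. unfold mergeX, mergeG. crush.
Qed.

Lemma merge_xbar_b n x g a b : (a < n)%nat -> (b < n)%nat -> a <> b -> g b b = false ->
  xbar n (mergeX x a b) (mergeG g a b) b = xbar n x g b + (if g b a then 0 else x a).
Proof.
  intros Ha Hb Hab Hbb. unfold xbar.
  rewrite (sumR_pt2 n (fun j => if g b j then x j else 0) (fun j => if mergeG g a b b j then mergeX x a b j else 0) a b (if g b a then - x a else 0) 0); auto.
  - unfold mergeX. crush.
  - intros v Hv. unfold mergeX, mergeG. crush.
Qed.

Lemma merge_xbar_u n x g a b u : (a < n)%nat -> (b < n)%nat -> a <> b -> u <> a -> u <> b ->
  0 <= x a -> 0 <= x b -> xbar n x g u <= xbar n (mergeX x a b) (mergeG g a b) u.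
Proof.
  intros Ha Hb Hab Hua Hub Hxa Hxb. unfold xbar.
  rewrite (sumR_pt2 n (fun j => if g u j then x j else 0) (fun j => if mergeG g a b u j then mergeX x a b j else 0) a b (if g u a then - x a else 0)
     (if g u b then x a else if g u a then x a + x b else 0)); auto.
  - unfold mergeX. crush.
  - intros v Hv. unfold mergeX, mergeG. crush.
Qed.

Lemma merge_core n U w p k x y g a b : Hyps n U p k -> efficient n U w p k x y g ->
  (a < n)%nat -> (b < n)%nat -> a <> b -> 0 < x a ->
  sumR n (fun u => eta n (mergeG g a b) u * k + (if Nat.eqb u b then (if g b a then k else 0) else 0))
    <= sumR n (fun u => eta n g u * k) -> False.
Proof.
  intros HH Heff Ha Hb Hab Hxa Hcost.
  pose proof HH as (Hk&Hp&_).
  pose proof (feas_nonneg _ _ _ _ _ _ _ (proj1 Heff)) as Hnn.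
  destruct (Hnn a Ha) as (Xa&Ya&Ga). destruct (Hnn b Hb) as (Xb&Yb&Gb).
  set (s := if g b a then k else 0).
  assert (Hs : 0 <= s) by (unfold s; destruct (g b a); lra).
  assert (Hpb := Hp b Hb).
  set (y' := fun v => if Nat.eqb v b then y b + s / p b else y v).
  assert (Hy' : forall v, (v < n)%nat -> y v <= y' v /\ 0 <= y' v).
  { intros v Hv. unfold y'. destruct (Nat.eqb_spec v b); [subst|split; [lra|apply Hnn; auto]].
    assert (0 <= s / p b) by (apply Rdiv_le_0_compat; lra). lra. }
  assert (Hxnn : forall v, (v < n)%nat -> 0 <= x v) by (intros v Hv; apply Hnn; auto).
  assert (Hxb : forall u, (u < n)%nat -> xbar n x g u <= xbar n (mergeX x a b) (mergeG g a b) u).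
  { intros u Hu. destruct (Nat.eq_dec u a); [subst; apply merge_xbar_a; auto|].
    destruct (Nat.eq_dec u b); [subst; rewrite merge_xbar_b by auto; destruct (g b a); lra|].
    apply merge_xbar_u; auto. }
  apply (better n U w p k x y g (mergeX x a b) y' (mergeG g a b) b HH Heff); auto.
  - intros u Hu. repeat split.
    + unfold mergeX. destruct (Nat.eqb_spec u a); [lra|]. destruct (Nat.eqb_spec u b); [lra|auto].
    + apply Hy'; auto.
    + apply merge_loop; auto. apply Hnn; auto.
  - unfold costf.
    assert (E1 : sumR n (fun i => mergeX x a b i + p i * y' i + eta n (mergeG g a b) i * k) =
       sumR n (fun i => (mergeX x a b i + p i * y i) + (eta n (mergeG g a b) i * k +
          (if Nat.eqb i b then s else 0)))).
    { apply sumR_ext. intros i Hi. unfold y'. destruct (Nat.eqb_spec i b); [subst; field; lra| lra]. }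
    assert (E2 : sumR n (fun i => x i + p i * y i + eta n g i * k) =
       sumR n (fun i => (x i + p i * y i) + eta n g i * k)) by (apply sumR_ext; intros; lra).
    assert (E3 : sumR n (fun i => mergeX x a b i + p i * y i) = sumR n (fun i => x i + p i * y i)).
    { rewrite (sumR_plus n (mergeX x a b) (fun i => p i * y i)).
      rewrite (sumR_plus n x (fun i => p i * y i)). rewrite merge_sumx by auto. lra. }
    rewrite E1.
    rewrite (sumR_plus n (fun i => mergeX x a b i + p i * y i)).
    rewrite (sumR_plus n (fun i => x i + p i * y i)). unfold s in *. lra.
  - intros u Hu. apply (U_mono n U p k); auto.
    + split; [apply xbar_nonneg; auto| apply Hxb; auto].
    + split; [apply Hnn; auto| apply Hy'; auto].
  - apply (U_mono_strict n U p k); auto.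
    + split; [apply xbar_nonneg; auto| apply Hxb; auto].
    + split; [apply Hnn; auto| apply Hy'; auto].
    + rewrite merge_xbar_b by auto. unfold y'. rewrite Nat.eqb_refl. unfold s.
      destruct (g b a).
      * right. assert (0 < k / p b) by (apply Rdiv_lt_0_compat; lra). lra.
      * left. lra.
Qed.

Lemma fact2 n U w p k x y g i j : Hyps n U p k -> efficient n U w p k x y g ->
  (i < n)%nat -> (j < n)%nat -> g i j = true -> x i = 0.
Proof.
  intros HH Heff Hi Hj Hg.
  pose proof (feas_nonneg _ _ _ _ _ _ _ (proj1 Heff)) as Hnn.
  destruct (Rlt_or_le 0 (x i)) as [Hx|Hx]; [exfalso| specialize (Hnn i Hi); lra].
  assert (Hij : i <> j) by (intro; subst; destruct (Hnn j Hj) as (_&_&G); congruence).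
  destruct (Hnn i Hi) as (_&_&Gi). destruct (Hnn j Hj) as (_&_&Gj).
  pose proof HH as (Hk&_).
  apply (merge_core n U w p k x y g i j HH Heff Hi Hj Hij Hx).
  apply sumR_le. intros u Hu.
  destruct (Nat.eq_dec u i); [subst; rewrite merge_eta_a, Hg by auto;
     destruct (Nat.eqb_spec i j); [lia|lra]|].
  destruct (Nat.eq_dec u j); [subst; rewrite merge_eta_b, Nat.eqb_refl by auto; destruct (g j i); lra|].
  rewrite merge_eta_u by auto. destruct (Nat.eqb_spec u j); [lia|].
  destruct (g u i && g u j); lra.
Qed.

Lemma fact3 n U w p k x y g a b l : Hyps n U p k -> efficient n U w p k x y g ->
  (a < n)%nat -> (b < n)%nat -> (l < n)%nat -> a <> b ->
  0 < x a -> g b a = false -> g l a = true -> g l b = true -> False.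
Proof.
  intros HH Heff Ha Hb Hl Hab Hxa Hba Hla Hlb.
  pose proof (feas_nonneg _ _ _ _ _ _ _ (proj1 Heff)) as Hnn.
  destruct (Hnn a Ha) as (_&_&Ga). destruct (Hnn b Hb) as (_&_&Gb). destruct (Hnn l Hl) as (_&_&Gl).
  assert (Hla' : l <> a) by (intro; subst; congruence).
  assert (Hlb' : l <> b) by (intro; subst; congruence).
  pose proof HH as (Hk&_).
  apply (merge_core n U w p k x y g a b HH Heff Ha Hb Hab Hxa).
  rewrite Hba.
  apply Rle_trans with (sumR n (fun u => eta n g u * k + (if Nat.eqb u a then k else 0)
                                                     + (if Nat.eqb u l then -k else 0))).
  - apply sumR_le. intros u Hu.
    destruct (Nat.eq_dec u a); [subst; rewrite merge_eta_a by auto;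
      rewrite Nat.eqb_refl; destruct (Nat.eqb_spec a b), (Nat.eqb_spec a l); try lia; destruct (g a b); lra|].
    destruct (Nat.eq_dec u b); [subst; rewrite merge_eta_b, Hba by auto;
      destruct (Nat.eqb_spec b a), (Nat.eqb_spec b l), (Nat.eqb_spec b b); try lia; lra|].
    rewrite merge_eta_u by auto.
    destruct (Nat.eqb_spec u a), (Nat.eqb_spec u b); try lia.
    destruct (Nat.eqb_spec u l).
    + subst. rewrite Hla, Hlb. simpl. lra.
    + destruct (g u a && g u b); lra.
  - rewrite (sumR_pt2 n (fun u => eta n g u * k) _ a l k (-k)); auto. lra.
Qed.

Definition shiftX (x : nat -> R) t1 t2 (t : R) : nat -> R :=
  fun v => if Nat.eqb v t1 then x t1 + t else if Nat.eqb v t2 then x t2 - t else x v.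

Definition redirG (g : network) t1 t2 : network :=
  fun u v => if Nat.eqb v t2 then false else if Nat.eqb v t1 then (g u t1 || g u t2) else g u v.

Lemma shift_sum n x t1 t2 t : (t1 < n)%nat -> (t2 < n)%nat -> t1 <> t2 ->
  sumR n (shiftX x t1 t2 t) = sumR n x.
Proof.
  intros H1 H2 H12. rewrite (sumR_pt2 n x _ t1 t2 t (-t)); auto; [lra|].
  intros v Hv. unfold shiftX. crush.
Qed.

Lemma shift_xbar n x g t1 t2 t u : (t1 < n)%nat -> (t2 < n)%nat -> t1 <> t2 ->
  xbar n (shiftX x t1 t2 t) g u = xbar n x g u +
    t * ((if Nat.eqb u t1 then 1 else 0) - (if Nat.eqb u t2 then 1 else 0)
         + (if g u t1 then 1 else 0) - (if g u t2 then 1 else 0)).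
Proof.
  intros H1 H2 H12. unfold xbar.
  rewrite (sumR_pt2 n (fun j => if g u j then x j else 0)
     (fun j => if g u j then shiftX x t1 t2 t j else 0) t1 t2
     (if g u t1 then t else 0) (if g u t2 then -t else 0)); auto.
  - unfold shiftX. crush.
  - intros v Hv. unfold shiftX. crush.
Qed.

Lemma redir_xbar n x g t1 t2 t u : (t1 < n)%nat -> (t2 < n)%nat -> t1 <> t2 ->
  (g u t1 = true -> g u t2 = false) ->
  xbar n (shiftX x t1 t2 t) (redirG g t1 t2) u = xbar n x g u +
    (if g u t2 then x t1 - x t2 else 0) +
    t * ((if Nat.eqb u t1 then 1 else 0) - (if Nat.eqb u t2 then 1 else 0)
         + (if g u t1 || g u t2 then 1 else 0)).
Proof.
  intros H1 H2 H12 Hnb. unfold xbar.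
  rewrite (sumR_pt2 n (fun j => if g u j then x j else 0)
     (fun j => if redirG g t1 t2 u j then shiftX x t1 t2 t j else 0) t1 t2
     (if g u t1 then t else if g u t2 then x t1 + t else 0) (if g u t2 then - x t2 else 0)); auto.
  - unfold shiftX. destruct (g u t1) eqn:E1; [rewrite (Hnb eq_refl)|]; crush.
  - intros v Hv. unfold shiftX, redirG. crush.
Qed.

Lemma redir_eta n g t1 t2 u : (t1 < n)%nat -> (t2 < n)%nat -> t1 <> t2 ->
  eta n (redirG g t1 t2) u <= eta n g u.
Proof.
  intros H1 H2 H12. unfold eta.
  rewrite (sumR_pt2 n (fun j => if g u j then 1 else 0)
     (fun j => if redirG g t1 t2 u j then 1 else 0) t1 t2
     (if g u t1 then 0 else if g u t2 then 1 else 0) (if g u t2 then -1 else 0)); auto.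
  - crush.
  - intros v Hv. unfold redirG. crush.
Qed.

Lemma fermat_welfare n U p k (A c y : nat -> R) r : Hyps n U p k ->
  (forall u, (u < n)%nat -> 0 <= A u) -> (forall u, (u < n)%nat -> 0 <= y u) -> 0 < r ->
  (forall t, -r < t < r -> sumR n (fun u => U u (A u + t * c u) (y u)) <= sumR n (fun u => U u (A u) (y u))) ->
  sumR n (fun u => c u * Derive (fun s => U u s (y u)) (A u)) = 0.
Proof.
  intros HH HA Hy Hr H.
  apply (fermat (fun t => sumR n (fun u => U u (A u + t * c u) (y u))) _ r); auto.
  - apply (is_derive_sumR n (fun u t => U u (A u + t * c u) (y u))).
    intros u Hu. apply (is_derive_lin (fun s => U u s (y u))).
    apply (ex_D n U p k); auto.
  - intros t Ht. rewrite (sumR_ext n (fun u => U u (A u + 0 * c u) (y u)) (fun u => U u (A u) (y u))).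
    apply H; auto. intros u Hu. f_equal. ring.
Qed.

Lemma cost_split n p k x y g : sumR n (costf n p k x y g) =
  sumR n x + sumR n (fun i => p i * y i) + sumR n (fun i => eta n g i * k).
Proof.
  unfold costf.
  rewrite (sumR_plus n (fun i => x i + p i * y i) (fun i => eta n g i * k)).
  rewrite (sumR_plus n x (fun i => p i * y i)). reflexivity.
Qed.

Lemma sumR_minus n f g : sumR n (fun u => f u - g u) = sumR n f - sumR n g.
Proof. induction n; [rewrite !sumR_0; lra|]. rewrite !sumR_S, IHn; lra. Qed.

Lemma fact4 n U w p k x y g t1 t2 m : Hyps n U p k -> efficient n U w p k x y g ->
  (t1 < n)%nat -> (t2 < n)%nat -> (m < n)%nat -> t1 <> t2 -> g m t2 = true ->
  0 < x t2 -> x t2 <= x t1 ->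
  (forall v, (v < n)%nat -> g t1 v = false) -> (forall v, (v < n)%nat -> g t2 v = false) ->
  (forall u, (u < n)%nat -> g u t1 = true -> g u t2 = false) -> False.
Proof.
  intros HH Heff H1 H2 Hm H12 Hmg Hx2 Hx12 Hn1 Hn2 Hnb.
  pose proof Heff as [[Hnn Hcost] Hopt].
  assert (Hxnn : forall v, (v < n)%nat -> 0 <= x v) by (intros v Hv; apply Hnn; auto).
  assert (Hynn : forall v, (v < n)%nat -> 0 <= y v) by (intros v Hv; apply Hnn; auto).
  assert (Hxb : forall u, (u < n)%nat -> 0 <= xbar n x g u) by (apply xbar_nonneg; auto).
  set (c := fun u => (if Nat.eqb u t1 then 1 else 0) - (if Nat.eqb u t2 then 1 else 0)
         + (if g u t1 then 1 else 0) - (if g u t2 then 1 else 0)).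
  set (e := fun u => (if Nat.eqb u t1 then 1 else 0) - (if Nat.eqb u t2 then 1 else 0)
         + (if g u t1 || g u t2 then 1 else 0)).
  set (dd := fun u => if g u t2 then x t1 - x t2 else 0).
  assert (Hdd : forall u, 0 <= dd u) by (intro u; unfold dd; destruct (g u t2); lra).
  assert (Hshift_nn : forall t, -x t2 < t < x t2 -> forall v, (v < n)%nat -> 0 <= shiftX x t1 t2 t v).
  { intros t Ht v Hv. unfold shiftX. destruct (Nat.eqb_spec v t1); [lra|].
    destruct (Nat.eqb_spec v t2); [lra| auto]. }
  assert (S1 : sumR n (fun u => c u * Derive (fun s => U u s (y u)) (xbar n x g u)) = 0).
  { apply (fermat_welfare n U p k _ c y (x t2)); auto.
    intros t Ht.
    assert (Hf : feasible n w p k (shiftX x t1 t2 t) y g).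
    { split.
      - intros i Hi. repeat split; [apply Hshift_nn; auto|apply Hynn; auto|apply Hnn; auto].
      - fold (costf n p k (shiftX x t1 t2 t) y g). rewrite cost_split, shift_sum by auto.
        fold (costf n p k x y g) in Hcost. rewrite cost_split in Hcost. lra. }
    specialize (Hopt _ _ _ Hf). unfold welfare in Hopt.
    rewrite (sumR_ext n (fun u => U u (xbar n x g u + t * c u) (y u))
                        (fun i => U i (xbar n (shiftX x t1 t2 t) g i) (y i))); auto.
    intros u Hu. rewrite shift_xbar by auto. reflexivity. }
  assert (S2 : sumR n (fun u => e u * Derive (fun s => U u s (y u)) (xbar n x g u + dd u)) = 0).
  { apply (fermat_welfare n U p k (fun u => xbar n x g u + dd u) e y (x t2)); auto.
    { intros u Hu. specialize (Hxb u Hu). specialize (Hdd u). lra. }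
    intros t Ht.
    assert (Hf : forall t, -x t2 < t < x t2 -> feasible n w p k (shiftX x t1 t2 t) y (redirG g t1 t2)).
    { intros t' Ht'. split.
      - intros i Hi. repeat split; [apply Hshift_nn; auto|apply Hynn; auto|].
        unfold redirG. destruct (Nat.eqb_spec i t2); auto. destruct (Nat.eqb_spec i t1).
        + subst. rewrite Hn1, Hn1 by auto. reflexivity.
        + apply Hnn; auto.
      - fold (costf n p k (shiftX x t1 t2 t') y (redirG g t1 t2)). rewrite cost_split, shift_sum by auto.
        fold (costf n p k x y g) in Hcost. rewrite cost_split in Hcost.
        assert (sumR n (fun i => eta n (redirG g t1 t2) i * k) <= sumR n (fun i => eta n g i * k)).
        { apply sumR_le. intros i Hi. apply Rmult_le_compat_r. destruct HH; lra. apply redir_eta; auto. }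
        lra. }
    assert (Hw : forall t, -x t2 < t < x t2 ->
       welfare n U (shiftX x t1 t2 t) y (redirG g t1 t2) =
       sumR n (fun u => U u (xbar n x g u + dd u + t * e u) (y u))).
    { intros t' Ht'. unfold welfare. apply sumR_ext. intros u Hu. rewrite redir_xbar; auto. }
    pose proof (Hopt _ _ _ (Hf t Ht)) as Ha. pose proof (Hopt _ _ _ (Hf 0 ltac:(lra))) as Hb.
    rewrite Hw in Ha, Hb by lra.
    assert (Hc : welfare n U x y g <= sumR n (fun u => U u (xbar n x g u + dd u) (y u))).
    { apply sumR_le. intros u Hu. apply (U_mono n U p k); auto.
      - specialize (Hdd u). specialize (Hxb u Hu). lra.
      - specialize (Hynn u Hu). lra. }
    lra. }
  assert (Hpos : forall u a, (u < n)%nat -> 0 <= a -> 0 < Derive (fun s => U u s (y u)) a).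
  { intros u a Hu Ha. apply (D_pos n U p k); auto. }
  assert (Hlt : sumR n (fun _ => 0) < sumR n (fun u => e u * Derive (fun s => U u s (y u)) (xbar n x g u + dd u)
                                           - c u * Derive (fun s => U u s (y u)) (xbar n x g u))).
  { apply (sumR_lt n _ _ m); auto.
    - intros u Hu. unfold e, c, dd.
      destruct (Nat.eqb_spec u t1).
      + subst. rewrite !Hn1 by auto. destruct (Nat.eqb_spec t1 t2); [lia|]. simpl.
        replace (xbar n x g t1 + 0) with (xbar n x g t1) by ring. lra.
      + destruct (Nat.eqb_spec u t2).
        * subst. rewrite !Hn2 by auto. simpl. replace (xbar n x g t2 + 0) with (xbar n x g t2) by ring. lra.
        * destruct (g u t1) eqn:E1.
          -- rewrite (Hnb u Hu E1). simpl. replace (xbar n x g u + 0) with (xbar n x g u) by ring. lra.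
          -- destruct (g u t2); simpl.
             ++ assert (0 < Derive (fun s => U u s (y u)) (xbar n x g u + (x t1 - x t2))).
                { apply Hpos; auto. specialize (Hxb u Hu). lra. }
                assert (0 < Derive (fun s => U u s (y u)) (xbar n x g u)) by (apply Hpos; auto).
                lra.
             ++ lra.
    - unfold e, c, dd. 
      assert (Hm1 : m <> t1) by (intro; subst; rewrite Hn1 in Hmg; auto; discriminate).
      assert (Hm2 : m <> t2) by (intro; subst; rewrite Hn2 in Hmg; auto; discriminate).
      destruct (Nat.eqb_spec m t1); [lia|]. destruct (Nat.eqb_spec m t2); [lia|].
      rewrite Hmg. destruct (g m t1) eqn:E1; [rewrite (Hnb m Hm E1) in Hmg; discriminate|]. simpl.
      assert (0 < Derive (fun s => U m s (y m)) (xbar n x g m + (x t1 - x t2))).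
      { apply Hpos; auto. specialize (Hxb m Hm). lra. }
      assert (0 < Derive (fun s => U m s (y m)) (xbar n x g m)) by (apply Hpos; auto).
      lra. }
  rewrite sumR_zero, sumR_minus in Hlt. lra.
Qed.

Lemma targets_eq n U w p k x y g i j i' j' : Hyps n U p k -> efficient n U w p k x y g ->
  (i < n)%nat -> (j < n)%nat -> (i' < n)%nat -> (j' < n)%nat ->
  g i j = true -> g i' j' = true -> j = j'.
Proof.
  intros HH Heff Hi Hj Hi' Hj' Hg Hg'.
  destruct (Nat.eq_dec j j') as [|Hne]; auto. exfalso.
  assert (X1 : 0 < x j) by (apply (fact1 n U w p k x y g i j); auto).
  assert (X2 : 0 < x j') by (apply (fact1 n U w p k x y g i' j'); auto).
  assert (N1 : forall v, (v < n)%nat -> g j v = false).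
  { intros v Hv. destruct (g j v) eqn:E; auto.
    pose proof (fact2 n U w p k x y g j v HH Heff Hj Hv E). lra. }
  assert (N2 : forall v, (v < n)%nat -> g j' v = false).
  { intros v Hv. destruct (g j' v) eqn:E; auto.
    pose proof (fact2 n U w p k x y g j' v HH Heff Hj' Hv E). lra. }
  assert (NB : forall u, (u < n)%nat -> g u j = true -> g u j' = false).
  { intros u Hu E. destruct (g u j') eqn:E'; auto. exfalso.
    apply (fact3 n U w p k x y g j j' u HH Heff); auto. }
  destruct (Rle_or_lt (x j') (x j)).
  - apply (fact4 n U w p k x y g j j' i' HH Heff); auto.
  - apply (fact4 n U w p k x y g j' j i HH Heff); auto. lra.
    intros u Hu E. destruct (g u j) eqn:E'; auto. rewrite (NB u Hu E') in E. discriminate.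
Qed.

Theorem proposition6
  (n : nat) (U : nat -> R -> R -> R) (w p : nat -> R) (k : R)
  (gam : nat -> R -> R)
  (Hk : 0 < k)
  (Hw : forall i, (i < n)%nat -> 0 < w i)
  (Hp : forall i, (i < n)%nat -> 0 < p i)
  (HUC2 : forall i, (i < n)%nat -> C2_quadrant (U i))
  (HUconc : forall i, (i < n)%nat -> strictly_concave_quadrant (U i))
  (HUinc : forall i, (i < n)%nat -> increasing_quadrant (U i))
  (Hgam : forall i, (i < n)%nat -> engel_curve (U i) (p i) (gam i))
  (HA1 : forall i, (i < n)%nat -> assumption1_curve (gam i))
  (x y : nat -> R) (g : network)
  (Heff : efficient n U w p k x y g) :
  empty_network n g \/ star_only_hub_active n g x.
Proof.
  assert (HH : Hyps n U p k) by (unfold Hyps; exact (conj Hk (conj Hp (conj HUC2 (conj HUconc HUinc))))). 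
  pose proof (feas_nonneg _ _ _ _ _ _ _ (proj1 Heff)) as Hnn.
  destruct (classic (exists i j, (i < n)%nat /\ (j < n)%nat /\ g i j = true)) as [[i0 [h (Hi0&Hh&Hg0)]]|Hno].
  - right. exists h, (fun i => Nat.eqb i h || g i h).
    assert (Hih : i0 <> h) by (intro; subst; destruct (Hnn h Hh) as (_&_&G); congruence).
    split; [auto|]. split; [rewrite Nat.eqb_refl; reflexivity|].
    split; [exists i0; rewrite Hg0, orb_true_r; auto|].
    split.
    { intros i j Hi Hj. split.
      - intros E. assert (j = h) by (apply (targets_eq n U w p k x y g i j i0 h HH Heff); auto).
        subst. assert (i <> h) by (intro; subst; destruct (Hnn h Hh) as (_&_&G); congruence).
        rewrite E, orb_true_r. auto.
      - intros (E1&E2&E3). subst. destruct (Nat.eqb_spec i h); [lia|]. simpl in E1. exact E1. }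
    split; [apply (fact1 n U w p k x y g i0 h); auto|].
    intros i Hi E Hne. destruct (Nat.eqb_spec i h); [lia|]. simpl in E.
    apply (fact2 n U w p k x y g i h); auto.
  - left. intros i j Hi Hj. destruct (g i j) eqn:E; auto. exfalso. apply Hno. eauto.
Qed.
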